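(* Let $\mathcal M$ be a left $\mathcal A$-module and $(N_i)_{i\in I}$ a family of $R$-submodules of $\mathcal M$. Then for every choice of $\vartheta$: (i) $\bigcap_{i\in I}\sigma_\vartheta(N_i)\subseteq\sigma_\vartheta\big(\bigcap_{i\in I}N_i\big)$; (ii) if $I$ is finite, then $\bigcap_{i\in I}\tau_\vartheta(N_i)\subseteq\tau_\vartheta\big(\bigcap_{i\in I}N_i\big)$. In particular, if $u\in\mathcal M$ and $N_1,\dots,N_k$ are $R$-submodules with $u\in\tau_\vartheta(N_i)$ for all $i$, then $u\in\tau_\vartheta\big(\bigcap_{i=1}^kN_i\big)$.
   Context: $R$ is a unital commutative ring and $\mathcal A$ an associative unital (not necessarily commutative) $R$-algebra. The symbol $\vartheta$ ranges over ''left'', ''right'', ''pre-two-sided'', ''two-sided''. An $R$-submodule $J\subseteq\mathcal A$ is a left (resp. right; two-sided) Mathieu subspace of $\mathcal A$ if whenever $a\in\mathcal A$ satisfies $a^m\in J$ for all $m\ge1$, then for all $b,c\in\mathcal A$ there is $N_0$ with $ba^m\in J$ (resp. $a^mc\in J$; $ba^mc\in J$) for all $m\ge N_0$; pre-two-sided means both left and right. A $\vartheta$-ideal means a left/right/two-sided ideal accordingly, and a two-sided ideal for $\vartheta$ = pre-two-sided. For a left $\mathcal A$-module $\mathcal M$, $u\in\mathcal M$, $N\subseteq \mathcal M$, $(N:u)=\{a\in\mathcal A: au\in N\}$. For an $R$-submodule $N$ of $\mathcal M$, $\sigma_\vartheta(N)=\{u\in\mathcal M: (N:u)\text{ is a }\vartheta\text{-ideal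 of }\mathcal A\}$ and $\tau_\vartheta(N)=\{u\in\mathcal M: (N:u)\text{ is a }\vartheta\text{-Mathieu subspace of }\mathcal A\}$. *)

(* Defs.v *)
From HB Require Import structures.
From mathcomp Require Import all_boot all_order all_algebra.
Set Implicit Arguments. Unset Strict Implicit. Unset Printing Implicit Defensive.
Import GRing.Theory.
Local Open Scope ring_scope.

Inductive theta := Left | Right | PreTwoSided | TwoSided.

Section MathieuDefs.
Variables (R : comPzRingType) (A : algType R) (M : lmodType A).

Definition is_Rsubmod_alg (J : A -> Prop) : Prop :=
  [/\ J 0, (forall x y, J x -> J y -> J (x + y)) & (forall (r : R) x, J x -> J (r *: x))].

Definition is_Rsubmod (N : M -> Prop) : Prop :=
  [/\ N 0, (forall x y, N x -> N y -> N (x + y))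
         & (forall (r : R) x, N x -> N ((r%:A : A) *: x))].

Definition colon (N : M -> Prop) (u : M) : A -> Prop := fun a => N (a *: u).

Definition left_ideal (J : A -> Prop) : Prop :=
  [/\ J 0, (forall x y, J x -> J y -> J (x + y)) & (forall a x, J x -> J (a * x))].
Definition right_ideal (J : A -> Prop) : Prop :=
  [/\ J 0, (forall x y, J x -> J y -> J (x + y)) & (forall a x, J x -> J (x * a))].
Definition two_sided_ideal (J : A -> Prop) : Prop := left_ideal J /\ right_ideal J.

Definition theta_ideal (t : theta) (J : A -> Prop) : Prop :=
  match t with
  | Left => left_ideal J
  | Right => right_ideal J
  | PreTwoSided | TwoSided => two_sided_ideal J
  end.

Definition all_powers_in (J : A -> Prop) (a : A) : Prop :=
  forall m : nat, (1 <= m)%N -> J (a ^+ m).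

Definition left_Mathieu (J : A -> Prop) : Prop :=
  is_Rsubmod_alg J /\
  forall a, all_powers_in J a ->
    forall b : A, exists N0 : nat, forall m : nat, (N0 <= m)%N -> J (b * a ^+ m).
Definition right_Mathieu (J : A -> Prop) : Prop :=
  is_Rsubmod_alg J /\
  forall a, all_powers_in J a ->
    forall c : A, exists N0 : nat, forall m : nat, (N0 <= m)%N -> J (a ^+ m * c).
Definition two_sided_Mathieu (J : A -> Prop) : Prop :=
  is_Rsubmod_alg J /\
  forall a, all_powers_in J a ->
    forall b c : A, exists N0 : nat, forall m : nat, (N0 <= m)%N -> J (b * a ^+ m * c).

Definition theta_Mathieu (t : theta) (J : A -> Prop) : Prop :=
  match t with
  | Left => left_Mathieu J
  | Right => right_Mathieu J
  | PreTwoSided => left_Mathieu J /\ right_Mathieu J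
  | TwoSided => two_sided_Mathieu J
  end.

Definition sigma_theta (t : theta) (N : M -> Prop) : M -> Prop :=
  fun u => theta_ideal t (colon N u).
Definition tau_theta (t : theta) (N : M -> Prop) : M -> Prop :=
  fun u => theta_Mathieu t (colon N u).

Definition bigcapM (I : Type) (F : I -> M -> Prop) : M -> Prop :=
  fun u => forall i, F i u.

End MathieuDefs.

(* Main.v *)
Require Import Defs.
From HB Require Import structures.
From mathcomp Require Import all_boot all_order all_algebra.
Local Open Scope ring_scope.

Lemma fin_bound (I : finType) (P : I -> nat -> Prop) :
  (forall i, exists N0, forall m, (N0 <= m)%N -> P i m) ->
  exists N0, forall i m, (N0 <= m)%N -> P i m.
Proof.
move=> H.
have: forall s : seq I, exists N0, forall i, i \in s -> forall m, (N0 <= m)%N -> P i m.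
  elim=> [|x s [N IH]]; first by exists 0%N.
  have [Nx Hx] := H x.
  exists (maxn N Nx) => i; rewrite inE => /orP [/eqP -> | Hi] m Hm.
    by apply: Hx; apply: leq_trans Hm; apply: leq_maxr.
  by apply: IH => //; apply: leq_trans Hm; apply: leq_maxl.
move=> /(_ (enum I)) [N HN]; exists N => i m Hm; apply: HN => //.
by rewrite mem_enum.
Qed.

Lemma sub_cap (R : comPzRingType) (A : algType R) (M : lmodType A)
  (I : Type) (N : I -> M -> Prop) u :
  (forall i, is_Rsubmod_alg (colon (N i) u)) -> is_Rsubmod_alg (colon (bigcapM N) u).
Proof.
move=> H; split.
- by move=> i; case: (H i).
- by move=> x y Hx Hy i; case: (H i) => _ Hp _; apply: Hp.
- by move=> r x Hx i; case: (H i) => _ _ Hs; apply: Hs.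
Qed.

Lemma lid_cap (R : comPzRingType) (A : algType R) (M : lmodType A)
  (I : Type) (N : I -> M -> Prop) u :
  (forall i, left_ideal (colon (N i) u)) -> left_ideal (colon (bigcapM N) u).
Proof.
move=> H; split.
- by move=> i; case: (H i).
- by move=> x y Hx Hy i; case: (H i) => _ Hp _; apply: Hp.
- by move=> r x Hx i; case: (H i) => _ _ Hs; apply: Hs.
Qed.

Lemma rid_cap (R : comPzRingType) (A : algType R) (M : lmodType A)
  (I : Type) (N : I -> M -> Prop) u :
  (forall i, right_ideal (colon (N i) u)) -> right_ideal (colon (bigcapM N) u).
Proof.
move=> H; split.
- by move=> i; case: (H i).
- by move=> x y Hx Hy i; case: (H i) => _ Hp _; apply: Hp.
- by move=> r x Hx i; case: (H i) => _ _ Hs; apply: Hs.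
Qed.

Lemma lM_cap (R : comPzRingType) (A : algType R) (M : lmodType A)
  (I : finType) (N : I -> M -> Prop) u :
  (forall i, left_Mathieu (colon (N i) u)) -> left_Mathieu (colon (bigcapM N) u).
Proof.
move=> H; split; first by apply: sub_cap => i; case: (H i).
move=> a Ha b.
have := @fin_bound I (fun i m => colon (N i) u (b * a ^+ m)).
case=> [i|N0 HN]; last by exists N0 => m Hm i; apply: HN.
case: (H i) => _ Hi; apply: Hi => m Hm; exact: Ha m Hm i.
Qed.

Lemma rM_cap (R : comPzRingType) (A : algType R) (M : lmodType A)
  (I : finType) (N : I -> M -> Prop) u :
  (forall i, right_Mathieu (colon (N i) u)) -> right_Mathieu (colon (bigcapM N) u).
Proof.
move=> H; split; first by apply: sub_cap => i; case: (H i).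
move=> a Ha b.
have := @fin_bound I (fun i m => colon (N i) u (a ^+ m * b)).
case=> [i|N0 HN]; last by exists N0 => m Hm i; apply: HN.
case: (H i) => _ Hi; apply: Hi => m Hm; exact: Ha m Hm i.
Qed.

Lemma tM_cap (R : comPzRingType) (A : algType R) (M : lmodType A)
  (I : finType) (N : I -> M -> Prop) u :
  (forall i, two_sided_Mathieu (colon (N i) u)) -> two_sided_Mathieu (colon (bigcapM N) u).
Proof.
move=> H; split; first by apply: sub_cap => i; case: (H i).
move=> a Ha b c.
have := @fin_bound I (fun i m => colon (N i) u (b * a ^+ m * c)).
case=> [i|N0 HN]; last by exists N0 => m Hm i; apply: HN.
case: (H i) => _ Hi; apply: Hi => m Hm; exact: Ha m Hm i.
Qed.

Lemma part2 (R : comPzRingType) (A : algType R) (M : lmodType A)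
    (t : theta) (I : finType) (N : I -> M -> Prop) u :
  bigcapM (fun i => tau_theta t (N i)) u -> tau_theta t (bigcapM N) u.
Proof.
rewrite /bigcapM /tau_theta; case: t => /= H.
- exact: lM_cap.
- exact: rM_cap.
- split; [apply: lM_cap => i; case: (H i) | apply: rM_cap => i; case: (H i)] => //.
- exact: tM_cap.
Qed.

Theorem proposition3p7 (R : comPzRingType) (A : algType R) (M : lmodType A)
    (t : theta) :
  (forall (I : Type) (N : I -> M -> Prop),
     (forall i, is_Rsubmod (N i)) ->
     forall u : M, bigcapM (fun i => sigma_theta t (N i)) u ->
       sigma_theta t (bigcapM N) u)
  /\
  (forall (I : finType) (N : I -> M -> Prop),
     (forall i, is_Rsubmod (N i)) ->
     forall u : M, bigcapM (fun i => tau_theta t (N i)) u ->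
       tau_theta t (bigcapM N) u)
  /\
  (forall (k : nat) (N : 'I_k -> M -> Prop) (u : M),
     (forall i, is_Rsubmod (N i)) ->
     (forall i, tau_theta t (N i) u) ->
     tau_theta t (bigcapM N) u).
Proof.
split; last split.
- move=> I N _ u; rewrite /bigcapM /sigma_theta; case: t => /= H.
  + exact: lid_cap.
  + exact: rid_cap.
  + split; [apply: lid_cap => i; case: (H i) | apply: rid_cap => i; case: (H i)] => //.
  + split; [apply: lid_cap => i; case: (H i) | apply: rid_cap => i; case: (H i)] => //.
- by move=> I N _ u; apply: part2.
- by move=> k N u _ H; apply: part2.
Qed.
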